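(* Let $0\le\beta<1$, let $C\in\mathbb{R}^{n\times n}$ be symmetric with $\|C\|=1$ and $\gamma\in\mathbb{R}$. Let $P^{(1)},\dots,P^{(K)}$ be real symmetric $n\times n$ matrices, each of one of the following forms: $\gamma\mathbb{1}-C$; $S-\frac{\operatorname{tr}S}{n}\mathbb{1}$ with $S$ diagonal, $S_{ii}=\operatorname{sgn}(\rho_{ii}-1/n)$ for some $\rho$; or $D/\|D\|$ with $D=\operatorname{diag}(\rho)-\mathbb{1}/n\neq 0$ for some $\rho$. Let $\Delta H^{(0)}=0$ and $\Delta H^{(k)}=P^{(k)}+\beta\Delta H^{(k-1)}$ for $k=1,\dots,K$ (the HU update matrices with momentum, with step lengths $\lambda_k=\frac{(1-\beta)^2}{2}\operatorname{tr}(\rho_{H^{(k-1)}}\Delta H^{(k)})$). Then $$\inf_{c\in\mathbb{R}}\|\Delta H^{(K)}-c\mathbb{1}\|\le\frac{1}{1-\beta}.$$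
   Context: $\|\cdot\|$ is the operator norm, $\operatorname{diag}(\rho)$ the diagonal matrix with the diagonal entries of $\rho$, $\operatorname{sgn}(0)=0$, and $\rho_H=e^{-H}/\operatorname{tr}e^{-H}$. In the HU routine with momentum, the update is $\Delta H^{(k)}=P^{(k)}+\frac{\beta}{\lambda_{k-1}}M^{(k-1)}$ with $M^{(k-1)}=\lambda_{k-1}\Delta H^{(k-1)}$, i.e. the recursion in the claim. *)

(* Defs.v *)
From HB Require Import structures.
From mathcomp Require Import all_boot all_order all_algebra.
From mathcomp Require Import all_classical all_reals.
Set Implicit Arguments. Unset Strict Implicit. Unset Printing Implicit Defensive.
Import Order.TTheory GRing.Theory Num.Theory.
Local Open Scope ring_scope.
Local Open Scope classical_set_scope.

Section Defs.
Variables (R : realType) (n : nat).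

Definition vnorm2 (x : 'cV[R]_n) : R := (x^T *m x) 0 0.

Definition opnorm (A : 'M[R]_n) : R :=
  sup [set Num.sqrt (vnorm2 (A *m x)) | x in [set x : 'cV[R]_n | vnorm2 x = 1]].

Definition diagpart (rho : 'M[R]_n) : 'M[R]_n :=
  \matrix_(i, j) (if i == j then rho i j else 0).

Definition form1 (gamma : R) (C P : 'M[R]_n) : Prop := P = gamma%:M - C.

Definition form2 (P : 'M[R]_n) : Prop :=
  exists rho : 'M[R]_n,
    let S : 'M[R]_n := \matrix_(i, j)
        (if i == j then Num.sg (rho i i - n%:R^-1) else 0) in
    P = S - (\tr S / n%:R)%:M.

Definition form3 (P : 'M[R]_n) : Prop :=
  exists rho : 'M[R]_n,
    let D := diagpart rho - (n%:R^-1)%:M in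
    D != 0 /\ P = (opnorm D)^-1 *: D.

Fixpoint DH (beta : R) (P : nat -> 'M[R]_n) (k : nat) : 'M[R]_n :=
  match k with
  | 0 => 0
  | k'.+1 => P k'.+1 + beta *: DH beta P k'
  end.

End Defs.

(* Main.v *)
Require Import Defs.
From HB Require Import structures.
From mathcomp Require Import all_boot all_order all_algebra.
From mathcomp Require Import all_classical all_reals.
From mathcomp Require Import ring lra.
Import Order.TTheory GRing.Theory Num.Theory.
Local Open Scope ring_scope.
Local Open Scope classical_set_scope.

Set Implicit Arguments. Unset Strict Implicit.
Section Aux.
Variables (R : realType) (n : nat).
Implicit Types x y : 'cV[R]_n.

Definition NN x : R := Num.sqrt (vnorm2 x).
Definition dot x y : R := \sum_i x i 0 * y i 0.

Lemma vnorm2E x : vnorm2 x = \sum_i x i 0 ^+ 2.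
Proof. by rewrite /vnorm2 mxE; apply: eq_bigr => i _; rewrite mxE expr2. Qed.

Lemma vnorm2_ge0 x : 0 <= vnorm2 x.
Proof. by rewrite vnorm2E; apply: sumr_ge0 => i _; apply: sqr_ge0. Qed.

Lemma NN_ge0 x : 0 <= NN x.
Proof. exact: sqrtr_ge0. Qed.

Lemma NN_sqr x : NN x ^+ 2 = vnorm2 x.
Proof. by rewrite sqr_sqrtr // vnorm2_ge0. Qed.

Lemma NN0_eq {x} : NN x = 0 -> forall i, x i 0 = 0.
Proof.
move=> h i; have : vnorm2 x = 0 by rewrite -NN_sqr h expr0n.
rewrite vnorm2E => /psumr_eq0P => H.
have /eqP := H (fun j _ => sqr_ge0 _) i isT.
by rewrite sqrf_eq0 => /eqP.
Qed.

Lemma CS x y : dot x y <= NN x * NN y.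
Proof.
set a := NN x; set b := NN y.
have [a0|a0] := eqVneq a 0.
  rewrite /dot big1 ?a0 ?mul0r // => i _; by rewrite (NN0_eq a0 i) mul0r.
have [b0|b0] := eqVneq b 0.
  rewrite /dot big1 ?b0 ?mulr0 // => i _; by rewrite (NN0_eq b0 i) mulr0.
have ha : 0 < a by rewrite lt0r a0 NN_ge0.
have hb : 0 < b by rewrite lt0r b0 NN_ge0.
have h0 : 0 <= \sum_i (b * x i 0 - a * y i 0) ^+ 2 by apply: sumr_ge0 => i _; apply: sqr_ge0.
have e : \sum_i (b * x i 0 - a * y i 0) ^+ 2 =
   b ^+ 2 * vnorm2 x - 2 * a * b * dot x y + a ^+ 2 * vnorm2 y.
  rewrite !vnorm2E /dot !mulr_sumr -!sumrB -big_split /=.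
  by apply: eq_bigr => i _; ring.
rewrite e -!NN_sqr -/a -/b in h0.
have : a * b * dot x y <= a * b * (a * b) by nra.
by rewrite ler_pM2l ?mulr_gt0.
Qed.

Lemma NN_triangle x y : NN (x + y) <= NN x + NN y.
Proof.
rewrite /NN -[X in _ <= X]ger0_norm ?addr_ge0 ?sqrtr_ge0 // -sqrtr_sqr.
rewrite ler_sqrt ?sqr_ge0 //.
have e : vnorm2 (x + y) = vnorm2 x + 2 * dot x y + vnorm2 y.
  rewrite !vnorm2E /dot mulr_sumr -!big_split /=.
  by apply: eq_bigr => i _; rewrite mxE; ring.
rewrite e; have := CS x y; rewrite /NN => h.
rewrite sqrrD !sqr_sqrtr ?vnorm2_ge0 //; nra.
Qed.

Lemma NN_scale (c : R) x : NN (c *: x) = `|c| * NN x.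
Proof.
rewrite /NN -sqrtr_sqr -sqrtrM ?sqr_ge0 //; congr Num.sqrt.
rewrite !vnorm2E mulr_sumr; apply: eq_bigr => i _; rewrite mxE; ring.
Qed.

Lemma NN_opp x : NN (- x) = NN x.
Proof. by rewrite -scaleN1r NN_scale normrN normr1 mul1r. Qed.

Lemma NN0 : NN (0 : 'cV[R]_n) = 0.
Proof. by rewrite -(scale0r (0 : 'cV[R]_n)) NN_scale normr0 mul0r. Qed.

Lemma opnorm_ge0 (A : 'M[R]_n) : 0 <= opnorm A.
Proof.
rewrite /opnorm; set E := [set _ | _ in _].
have [hs|hs] := pselect (has_sup E); last by rewrite sup_out.
case: (hs) => [[e He]] _.
apply: le_trans (sup_upper_bound hs He).
by case: He => z _ <-; apply: sqrtr_ge0.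
Qed.

Lemma opnorm_ub (A : 'M[R]_n) x : opnorm A != 0 -> vnorm2 x = 1 ->
  NN (A *m x) <= opnorm A.
Proof.
rewrite /opnorm; set E := [set _ | _ in _] => h hx.
have [hs|hs] := pselect (has_sup E); last by rewrite sup_out ?eqxx in h.
by apply: sup_upper_bound => //; exists x.
Qed.

Lemma opnorm_le (A : 'M[R]_n) (M : R) : 0 <= M ->
  (forall x, vnorm2 x = 1 -> NN (A *m x) <= M) -> opnorm A <= M.
Proof.
move=> M0 h; rewrite /opnorm; set E := [set _ | _ in _].
have [[e He]|ne] := pselect (E !=set0).
  apply: ge_sup; first by exists e.
  by move=> _ [z hz <-]; apply: h.
have -> : E = set0 by apply/seteqP; split=> z // Hz; apply: ne; exists z.
by rewrite sup0.
Qed.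

End Aux.

Theorem lemma3 (R : realType) (n K : nat) (beta gamma : R) (C : 'M[R]_n)
  (P : nat -> 'M[R]_n) :
  0 <= beta -> beta < 1 ->
  C^T = C -> opnorm C = 1 ->
  (forall k, (1 <= k <= K)%N ->
     (P k)^T = P k /\ (form1 gamma C (P k) \/ form2 (P k) \/ form3 (P k))) ->
  inf [set opnorm (DH beta P K - c%:M) | c in [set: R]] <= (1 - beta)^-1.
Proof.
move=> b0 b1 _ hC hP.
have hb : 0 < 1 - beta by rewrite subr_gt0.
have binv : 0 <= (1 - beta)^-1 by rewrite invr_ge0 ltW.
have step : forall k, (1 <= k <= K)%N -> exists c : R,
    forall x, vnorm2 x = 1 -> NN ((P k - c%:M) *m x) <= 1.
  move=> k /hP [_ [h1|[h2|h3]]].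
  - exists gamma => x hx; rewrite h1 /form1 addrAC subrr add0r mulNmx NN_opp.
    by rewrite -hC; apply: opnorm_ub => //; rewrite hC oner_eq0.
  - case: h2 => rho; set S := \matrix_(i, j) _ => ->.
    exists (- (\tr S / n%:R)) => x hx.
    rewrite raddfN /= opprK subrK.
    have -> : S = diag_mx (\row_i Num.sg (rho i i - n%:R^-1)).
      by apply/matrixP => i j; rewrite !mxE; case: eqP => [->|]; rewrite ?mulr1n ?mulr0n.
    rewrite mul_diag_mx /NN -sqrtr1 ler_sqrt // -hx !vnorm2E.
    apply: ler_sum => i _; rewrite !mxE exprMn.
    apply: ler_piMl; first exact: sqr_ge0.
    rewrite -real_normK ?num_real // normr_sg; by case: (_ != 0); rewrite /= ?expr1n ?expr0n.
  - case: h3 => rho; set D := _ - _ => [[Dn0 ->]].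
    exists 0 => x hx; rewrite raddf0 subr0 -scalemxAl NN_scale.
    have [z|nz] := eqVneq (opnorm D) 0.
      by rewrite z invr0 normr0 mul0r.
    have pos : 0 < opnorm D by rewrite lt0r nz opnorm_ge0.
    rewrite ger0_norm; last by rewrite invr_ge0 ltW.
    apply: le_trans (_ : _ <= (opnorm D)^-1 * opnorm D) _; last by rewrite mulVf.
    by apply: ler_wpM2l; [rewrite invr_ge0 ltW | exact: opnorm_ub].
have main : forall k, (k <= K)%N -> exists c : R,
    forall x, vnorm2 x = 1 -> NN ((DH beta P k - c%:M) *m x) <= (1 - beta)^-1.
  elim=> [_|k IH hk].
    by exists 0 => x _; rewrite /= raddf0 subrr mul0mx NN0.
  have [c hc] := IH (ltnW hk).
  have [c' hc'] := step k.+1 hk.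
  exists (c' + beta * c) => x hx.
  have -> : DH beta P k.+1 - (c' + beta * c)%:M =
      (P k.+1 - c'%:M) + beta *: (DH beta P k - c%:M).
    by rewrite /= raddfD /= scalerBr scale_scalar_mx opprD addrACA.
  rewrite mulmxDl -scalemxAl.
  apply: le_trans (NN_triangle _ _) _.
  rewrite NN_scale ger0_norm //.
  have h1 := hc' x hx; have h2 := hc x hx.
  have : 1 + beta * (1 - beta)^-1 = (1 - beta)^-1.
    by field; rewrite subr_eq0 eq_sym lt_eqF.
  move=> <-; apply: lerD => //; exact: ler_wpM2l.
have [c hc] := main K (leqnn K).
apply: le_trans (opnorm_le binv hc).
apply: ge_inf; last by exists c.
by exists 0 => _ [z _ <-]; apply: opnorm_ge0.
Qed.
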